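(* Let $\rho:\mathbb{Z}\to[0,\infty)$ be a weight with finite moments, and let $f,g$ be polynomials with $\deg f\le 2$, $\deg g\le 1$, satisfying $f(x+1)\rho(x+1)-f(x)\rho(x)=g(x)\rho(x)$ for all $x\in\mathbb{Z}$, and such that $\rho(x)f(x)$ vanishes at the end points of the support of $\rho$. Let $\{p_n\}_{n\ge0}$ be the monic polynomials ($\deg p_n=n$) orthogonal with respect to $\rho$: $\sum_{x\in\mathbb{Z}}p_m(x)p_n(x)\rho(x)=h_n\delta_{n,m}$ with $h_n>0$. Let $\mathcal{A}_{\rm l}=g(x)T+f(x)(\Delta+\nabla)$ with $T\phi(x)=\phi(x+1)$, $\Delta\phi(x)=\phi(x+1)-\phi(x)$, $\nabla\phi(x)=\phi(x)-\phi(x-1)$. Then there are real constants $c_n$ ($n\ge0$), depending only on $n$, $f$ and $g$, such that for all $n\ge0$ $$\mathcal{A}_{\rm l}p_n(x)=-\frac{c_n}{h_{n+1}}p_{n+1}(x)+\frac{c_{n-1}}{h_{n-1}}p_{n-1}(x)$$ (with the convention $p_{-1}=0$). Equivalently, with $\langle\phi,\psi\rangle=\sum_{x\in\mathbb{Z}}\phi(x)\psi(x)\rho(x)$, one has $\langle p_j,\mathcal{A}_{\rm l}p_k\rangle=c_j\delta_{k,j+1}-c_k\delta_{j,k+1}$ for all $j,k\ge0$.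
   Context: $\rho$ is taken to be zero outside its support; the orthogonal polynomials are assumed to exist for all degrees $n\ge0$. *)

(* Defs.v *)
From HB Require Import structures.
From mathcomp Require Import all_boot all_order all_algebra.
From mathcomp Require Import all_classical all_reals all_analysis.
Set Implicit Arguments. Unset Strict Implicit. Unset Printing Implicit Defensive.
Import Order.TTheory GRing.Theory Num.Theory numFieldNormedType.Exports.
Local Open Scope ring_scope.

Section Defs.
Variable R : realType.

Definition pevZ (p : {poly R}) (x : int) : R := p.[x%:~R].

(* Sum over Z of u : int -> R, as the sum of the series over x = 0,1,2,...
   and over x = -1,-2,-3,... (Negz n = -(n+1)). *)
Definition sumZ (u : int -> R) : R :=
  limn (series (fun n : nat => u (Posz n))) +
  limn (series (fun n : nat => u (Negz n))).

Definition finite_moments (rho : int -> R) : Prop :=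
  forall k : nat,
    cvgn (series (fun n : nat => `|(Posz n)%:~R : R| ^+ k * rho (Posz n))) /\
    cvgn (series (fun n : nat => `|(Negz n)%:~R : R| ^+ k * rho (Negz n))).

Definition ipZ (rho : int -> R) (phi psi : int -> R) : R :=
  sumZ (fun x => phi x * psi x * rho x).

Definition shiftT (phi : int -> R) : int -> R := fun x => phi (x + 1).
Definition fwdD (phi : int -> R) : int -> R := fun x => phi (x + 1) - phi x.
Definition bwdD (phi : int -> R) : int -> R := fun x => phi x - phi (x - 1).

Definition Al (f g : {poly R}) (phi : int -> R) : int -> R :=
  fun x => pevZ g x * shiftT phi x + pevZ f x * (fwdD phi x + bwdD phi x).

End Defs.

(* Main.v *)
Require Import Defs.
From HB Require Import structures.
From mathcomp Require Import all_boot all_order all_algebra.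
From mathcomp Require Import all_classical all_reals all_analysis.
From mathcomp Require Import lra ring zify.
Import Order.TTheory GRing.Theory Num.Theory numFieldNormedType.Exports.
Local Open Scope classical_set_scope.
Local Open Scope ring_scope.

Section Ana.
Variable R : realType.
Implicit Types u v : int -> R.

Definition SZ u := cvgn (series (fun n : nat => u (Posz n))) /\
                   cvgn (series (fun n : nat => u (Negz n))).

Lemma SZD u v : SZ u -> SZ v -> SZ (fun x => u x + v x).
Proof. by move=> [a b] [c d]; split; apply: is_cvg_seriesD. Qed.

Lemma sumZD u v : SZ u -> SZ v -> sumZ (fun x => u x + v x) = sumZ u + sumZ v.
Proof.
move=> [a b] [c d]; rewrite /sumZ.
rewrite (lim_seriesD a c) (lim_seriesD b d); lra.
Qed.

Lemma SZZ k u : SZ u -> SZ (fun x => k * u x).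
Proof. by move=> [a b]; split; [exact (@is_cvg_seriesZ _ _ k a) | exact (@is_cvg_seriesZ _ _ k b)]. Qed.

Lemma sumZZ k u : SZ u -> sumZ (fun x => k * u x) = k * sumZ u.
Proof.
move=> [a b]; rewrite /sumZ.
have E1 := @lim_seriesZ _ _ k a. have E2 := @lim_seriesZ _ _ k b.
change (limn (series (k *: (fun n : nat => u (Posz n)))) + limn (series (k *: (fun n : nat => u (Negz n)))) = k * (limn (series (fun n : nat => u (Posz n))) + limn (series (fun n : nat => u (Negz n))))).
rewrite E1 E2.
by rewrite mulrDr.
Qed.

Lemma SZ_ext u v : (forall x, u x = v x) -> SZ u -> SZ v.
Proof. by move=> e; have -> : u = v by apply: funext. Qed.

Lemma sumZ_ext u v : (forall x, u x = v x) -> sumZ u = sumZ v.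
Proof. by move=> e; have -> : u = v by apply: funext. Qed.

Lemma series_shift_neg (e d : nat -> R) l : (forall n, e n.+1 = d n) ->
  series d @ \oo --> l -> series e @ \oo --> e 0%N + l.
Proof.
move=> ed cd; rewrite -cvg_shiftS /=.
have -> : (fun n => series e n.+1) = (fun n => e 0%N + series d n).
  apply: funext => n; rewrite /series /= big_nat_recl //.
  by congr (_ + _); apply: eq_bigr => i _; rewrite ed.
by apply: cvgD => //; apply: cvg_cst.
Qed.

Lemma series_shift_pos (a b : nat -> R) l : (forall n, a n = b n.+1) ->
  series b @ \oo --> l -> series a @ \oo --> l - b 0%N.
Proof.
move=> ab cb; rewrite -cvg_shiftS in cb.
have -> : series a = (fun n => series b n.+1 - b 0%N).
  apply: funext => n; rewrite /series /= big_nat_recl //.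
  rewrite addrC addKr; apply: eq_bigr => i _; by rewrite ab.
by apply: cvgB => //; apply: cvg_cst.
Qed.

Lemma sumZ_shift u : SZ u -> SZ (fun x => u (x + 1)) /\
  sumZ (fun x => u (x + 1)) = sumZ u.
Proof.
move=> [cp cn].
have h1 := @series_shift_pos (fun n : nat => u (Posz n + 1)) (fun n => u (Posz n)) _
  (fun n => congr1 u (etrans (esym (PoszD n 1)) (congr1 Posz (addn1 n)))) cp.
have h2 : series (fun n : nat => u (Negz n + 1)) @ \oo -->
   u (Negz 0 + 1) + limn (series (fun n : nat => u (Negz n))).
  apply: series_shift_neg cn => n.
  congr u. rewrite !NegzE -[n.+2]addn1 -[n.+1]addn1 !PoszD. ring.
split; first by split; [exact: cvgP h1 | exact: cvgP h2].
rewrite /sumZ (cvg_lim _ h1) // (cvg_lim _ h2) //.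
have -> : Negz 0 + 1 = Posz 0 by [].
lra.
Qed.

End Ana.
Arguments SZ {R}.
Arguments SZD {R}.
Arguments SZZ {R}.
Arguments sumZD {R}.
Arguments sumZZ {R}.
Arguments SZ_ext {R}.
Arguments sumZ_ext {R}.
Arguments sumZ_shift {R}.

Section Main.
Variable R : realType.
Variable rho : int -> R.
Hypothesis Hmom : finite_moments rho.
Implicit Types P Q u v : {poly R}.

Lemma SZ0 : SZ (fun _ : int => (0:R)).
Proof.
have e : series (fun _ : nat => (0:R)) = (fun _ => 0).
  by apply: funext => n; rewrite /series /= big1.
by split; rewrite e; apply: cvgP (cvg_cst 0).
Qed.

Lemma SZ_sum m (F : 'I_m -> int -> R) : (forall i, SZ (F i)) ->
  SZ (fun x => \sum_(i < m) F i x).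
Proof.
elim: m F => [|m IH] F HF.
  by apply: (SZ_ext _ _ _ SZ0) => x; rewrite big_ord0.
apply: (SZ_ext _ _ _ (SZD _ _ (IH (fun i => F (widen_ord (leqnSn m) i)) (fun i => HF _)) (HF ord_max))).
by move=> x; rewrite big_ord_recr.
Qed.

Lemma SZ_mom k : SZ (fun x : int => (x%:~R : R) ^+ k * rho x).
Proof.
have [a b] := Hmom k; split.
  have -> : (fun n : nat => ((Posz n)%:~R : R) ^+ k * rho (Posz n)) =
            (fun n : nat => `|(Posz n)%:~R : R| ^+ k * rho (Posz n)).
    by apply: funext => n; rewrite ger0_norm // ler0z.
  exact: a.
have -> : (fun n : nat => ((Negz n)%:~R : R) ^+ k * rho (Negz n)) =
          ((-1) ^+ k) *: (fun n : nat => `|(Negz n)%:~R : R| ^+ k * rho (Negz n)).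
  apply: funext => n; change (((Negz n)%:~R : R) ^+ k * rho (Negz n) = (-1) ^+ k * (`|(Negz n)%:~R : R| ^+ k * rho (Negz n))).
  rewrite ler0_norm ?lerz0 // mulrA -exprMn mulN1r opprK.
  by [].
exact (@is_cvg_seriesZ _ _ ((-1) ^+ k) b).
Qed.

Lemma SJ P : SZ (fun x => pevZ P x * rho x).
Proof.
have S1 := @SZ_sum (size P) (fun i : 'I_(size P) => fun x => P`_i * ((x%:~R : R) ^+ i * rho x))
  (fun i => SZZ (P`_i) _ (SZ_mom i)).
apply: (SZ_ext _ _ _ S1).
  move=> x /=; rewrite /pevZ horner_coef mulr_suml; apply: eq_bigr => i _.
  by rewrite mulrA.
Qed.

Definition J P := sumZ (fun x => pevZ P x * rho x).

Lemma JD P Q : J (P + Q) = J P + J Q.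
Proof.
rewrite /J -(sumZD _ _ (SJ P) (SJ Q)); apply: (sumZ_ext _ _) => x.
by rewrite /pevZ hornerD mulrDl.
Qed.

Lemma JZ a P : J (a *: P) = a * J P.
Proof.
rewrite /J -(sumZZ a _ (SJ P)); apply: (sumZ_ext _ _) => x.
by rewrite /pevZ hornerZ mulrA.
Qed.

Lemma J0 : J 0 = 0.
Proof. by rewrite -(scale0r (0 : {poly R})) JZ mul0r. Qed.

Lemma JN P : J (- P) = - J P.
Proof. by rewrite -scaleN1r JZ mulN1r. Qed.

Lemma JB P Q : J (P - Q) = J P - J Q.
Proof. by rewrite JD JN. Qed.

Lemma J_sum m (F : 'I_m -> {poly R}) : J (\sum_(i < m) F i) = \sum_(i < m) J (F i).
Proof.
elim: m F => [|m IH] F; first by rewrite !big_ord0 J0.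
by rewrite !big_ord_recr JD IH.
Qed.

Lemma JSp Q : J Q = sumZ (fun x => pevZ Q (x + 1) * rho (x + 1)).
Proof. by rewrite (sumZ_shift _ (SJ Q)).2. Qed.

Definition Sh (c : R) (P : {poly R}) := P \Po ('X - c%:P).

Lemma pevZM P Q x : pevZ (P * Q) x = pevZ P x * pevZ Q x.
Proof. by rewrite /pevZ hornerM. Qed.
Lemma pevZD P Q x : pevZ (P + Q) x = pevZ P x + pevZ Q x.
Proof. by rewrite /pevZ hornerD. Qed.
Lemma pevZB P Q x : pevZ (P - Q) x = pevZ P x - pevZ Q x.
Proof. by rewrite /pevZ hornerD hornerN. Qed.

Lemma pevZ_Sp P x : pevZ (Sh (-1) P) x = pevZ P (x + 1).
Proof. by rewrite /pevZ /Sh horner_comp hornerXsubC intrD opprK. Qed.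

Lemma pevZ_Sm P x : pevZ (Sh 1 P) x = pevZ P (x - 1).
Proof. by rewrite /pevZ /Sh horner_comp hornerXsubC intrB. Qed.

Variables f g : {poly R}.
Hypothesis Hpear : forall x : int,
  pevZ f (x + 1) * rho (x + 1) - pevZ f x * rho x = pevZ g x * rho x.

Definition A P := g * Sh (-1) P + f * (Sh (-1) P - Sh 1 P).

Lemma AlE P x : Al f g (pevZ P) x = pevZ (A P) x.
Proof.
rewrite /Al /shiftT /fwdD /bwdD /A pevZD !pevZM pevZB pevZ_Sp pevZ_Sm.
ring.
Qed.

Lemma antisym0 u v : J (u * A v) = J (Sh 1 u * v * f) - J (u * f * Sh 1 v).
Proof.
have e : u * A v = u * (f + g) * Sh (-1) v - u * f * Sh 1 v by rewrite /A; ring.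
rewrite e JB; congr (_ - _).
rewrite (JSp (Sh 1 u * v * f)) /J; apply: (sumZ_ext _ _) => x.
rewrite !pevZM pevZD pevZ_Sp pevZ_Sm addrK.
have E' : pevZ f (x + 1) * rho (x + 1) = pevZ f x * rho x + pevZ g x * rho x.
  by rewrite -Hpear; ring.
rewrite -[RHS]mulrA E'; ring.
Qed.

Lemma antisym u v : J (u * A v) = - J (v * A u).
Proof.
rewrite !antisym0.
have e1 : Sh 1 u * v * f = v * f * Sh 1 u by ring.
have e2 : u * f * Sh 1 v = Sh 1 v * u * f by ring.
rewrite e1 e2; ring.
Qed.


Lemma size_Sh c P : size (Sh c P) = size P.
Proof. by rewrite /Sh size_comp_poly2 // size_XsubC. Qed.

Lemma size_pow_diff (a b : R) i : (size (('X - a%:P) ^+ i - ('X - b%:P) ^+ i)%R <= i)%N.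
Proof.
apply/leq_sizeP => j hj; rewrite coefB.
have [ltij|] := ltnP i j.
  by rewrite !nth_default ?subrr // size_exp_XsubC.
move=> hji; have -> : j = i by apply/eqP; rewrite eqn_leq hji hj.
have L c : (('X - c%:P) ^+ i)`_i = 1.
  by move: (lead_coefE (('X - c%:P) ^+ i)); rewrite size_exp_XsubC (monicP (monic_exp i (monicXsubC c))) /= => <-.
by rewrite !L subrr.
Qed.

Lemma Dsize a b P : (size (Sh a P - Sh b P)%R <= (size P).-1)%N.
Proof.
rewrite /Sh !comp_polyE -sumrB.
apply: (big_ind (fun q : {poly R} => (size q <= (size P).-1)%N)).
- by rewrite size_poly0.
- by move=> x y hx hy; apply: leq_trans (size_polyD _ _) _; rewrite geq_max hx hy.
move=> i _; rewrite -scalerBr; apply: leq_trans (size_scale_leq _ _) _.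
apply: leq_trans (size_pow_diff _ _ _) _.
move: (ltn_ord i) => H; rewrite -ltnS; apply: leq_trans H _; exact: leqSpred.
Qed.

Hypothesis Hf : (size f <= 3)%N.
Hypothesis Hg : (size g <= 2)%N.

Lemma sizeA P n : size P = n.+1 -> (size (A P) <= n.+2)%N.
Proof.
move=> sP; rewrite /A.
have h1 := size_polyMleq g (Sh (-1) P).
have h2 := size_polyMleq f (Sh (-1) P - Sh 1 P).
have h3 := Dsize (-1) 1 P.
have h4 := size_polyD (g * Sh (-1) P) (f * (Sh (-1) P - Sh 1 P)).
rewrite size_Sh sP in h1; rewrite sP in h3.
apply: leq_trans h4 _; rewrite geq_max; apply/andP; split.
  apply: leq_trans h1 _; lia.
apply: leq_trans h2 _.
have : (size f + size (Sh (-1) P - Sh 1 P)%R <= 3 + n)%N by apply: leq_add.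
move=> H; rewrite -subn1 leq_subLR; apply: (leq_trans H); by rewrite add1n addnC addn3.
Qed.

Variable p : nat -> {poly R}.
Variable h : nat -> R.
Hypothesis Hmon : forall n, p n \is monic.
Hypothesis Hsz : forall n, size (p n) = n.+1.
Hypothesis Hh : forall n, 0 < h n.
Hypothesis Hort : forall m n, J (p m * p n) = h n * (n == m)%:R.

Lemma span N Q : (size Q <= N)%N -> exists a : nat -> R, Q = \sum_(k < N) a k *: p k.
Proof.
elim: N Q => [|N IH] Q hQ.
  exists (fun _ => 0); rewrite big_ord0; apply/eqP; by rewrite -size_poly_leq0.
have pN : (p N)`_N = 1.
  by move: (lead_coefE (p N)); rewrite Hsz (monicP (Hmon N)) /= => <-.
have hQ' : (size (Q - Q`_N *: p N)%R <= N)%N.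
  apply/leq_sizeP => j hj; rewrite coefB coefZ.
  have [ltNj|] := ltnP N j.
    have e1 : Q`_j = 0 by apply: nth_default; apply: leq_trans hQ ltNj.
    have e2 : (p N)`_j = 0 by apply: nth_default; rewrite Hsz.
    by rewrite e1 e2 mulr0 subrr.
  move=> hjN; have -> : j = N by apply/eqP; rewrite eqn_leq hjN hj.
  by rewrite pN mulr1 subrr.
have [a ea] := IH _ hQ'.
exists (fun k => if k == N then Q`_N else a k).
rewrite big_ord_recr /= eqxx.
rewrite (eq_bigr (fun i : 'I_N => a i *: p i)); last by move=> i _; rewrite /= ltn_eqF.
by rewrite -ea subrK.
Qed.

Lemma coefJ N (a : nat -> R) j : (j < N)%N ->
  J (p j * \sum_(k < N) a k *: p k) = a j * h j.
Proof.
move=> hj; rewrite mulr_sumr J_sum (bigD1 (Ordinal hj)) //= big1 ?addr0.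
  by rewrite -scalerAr JZ Hort eqxx mulr1.
move=> k hk; rewrite -scalerAr JZ Hort.
have : (k : nat) != j by apply: contra hk => /eqP e; apply/eqP/val_inj.
by move/negbTE => ->; rewrite !mulr0.
Qed.

Lemma orth_low n Q : (size Q <= n)%N -> J (p n * Q) = 0.
Proof.
move=> hQ; have [a ->] := span _ _ hQ.
rewrite mulr_sumr J_sum big1 // => k _.
by rewrite -scalerAr JZ Hort ltn_eqF // !mulr0.
Qed.

Lemma expand N Q : (size Q <= N)%N -> Q = \sum_(k < N) (J (p k * Q) / h k) *: p k.
Proof.
move=> hQ; have [a ea] := span _ _ hQ.
rewrite {1}ea; apply: eq_bigr => k _; congr (_ *: _).
by rewrite ea coefJ // mulfK // gt_eqF.
Qed.

Definition c j := J (p j * A (p j.+1)).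

Lemma Jform j k : J (p j * A (p k)) = c j * (k == j.+1)%:R - c k * (j == k.+1)%:R.
Proof.
have low j' k' : (k'.+1 < j')%N -> J (p j' * A (p k')) = 0.
  by move=> hjk; apply: orth_low; apply: leq_trans (sizeA _ _ (Hsz k')) _.
have [hjk|hjk|->] := ltngtP j k.
- have [->|ne] := eqVneq k j.+1.
    by rewrite /c ltn_eqF // mulr1 mulr0 subr0.
  have -> : (j == k.+1) = false by apply: ltn_eqF; lia.
  rewrite antisym low; first by rewrite !mulr0 subr0 oppr0.
  by move: ne hjk; lia.
- have [->|ne] := eqVneq j k.+1.
    by rewrite antisym /c ltn_eqF // mulr0 mulr1 sub0r.
  have -> : (k == j.+1) = false by apply: ltn_eqF; lia.
  rewrite low; first by rewrite !mulr0 subr0.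
  by move: ne hjk; lia.
- rewrite subrr.
  have := antisym (p k) (p k); lra.
Qed.

Lemma pointwise n x : Al f g (pevZ (p n)) x =
  - (c n / h n.+1) * pevZ (p n.+1) x
  + (if n is n'.+1 then c n' / h n' * pevZ (p n') x else 0).
Proof.
rewrite AlE [A (p n)](expand _ _ (sizeA _ _ (Hsz n))).
rewrite /pevZ horner_sum.
under eq_bigr => k _ do rewrite hornerZ Jform.
rewrite big_ord_recr /= eqxx (ltn_eqF (leqnSn n.+1)) mulr1n mulr0n mulr0 sub0r.
case: n => [|n].
  rewrite big_ord1 /= mulr0n mulr0 subrr mul0r mul0r add0r.
  by rewrite mulr1 mulNr addr0.
rewrite big_ord_recr /= subrr mul0r mul0r addr0.
rewrite big_ord_recr /= eqxx (ltn_eqF (leqnSn n.+1)) mulr1n mulr0n mulr0 subr0 mulr1.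
rewrite big1 ?add0r; first by rewrite mulr1 mulNr mulNr addrC.
move=> k _ /=.
have -> : (n.+1 == k.+1) = false by apply: gtn_eqF; rewrite ltnS; exact: ltn_ord.
have -> : ((k : nat) == n.+2) = false by apply: ltn_eqF; apply: ltn_trans (ltn_ord k) _; lia.
by rewrite !mulr0n !mulr0 subr0 !mul0r.
Qed.

End Main.

Theorem proposition3p8 (R : realType) (rho : int -> R) (f g : {poly R})
  (p : nat -> {poly R}) (h : nat -> R) :
  (forall x, 0 <= rho x) ->
  finite_moments rho ->
  (size f <= 3)%N -> (size g <= 2)%N ->
  (forall x : int,
     pevZ f (x + 1) * rho (x + 1) - pevZ f x * rho x = pevZ g x * rho x) ->
  (* rho f vanishes at the end points of the support of rho (when they exist) *)
  (forall a : int, rho a != 0 -> (forall x : int, x < a -> rho x = 0) ->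
     pevZ f a * rho a = 0) ->
  (forall b : int, rho b != 0 -> (forall x : int, b < x -> rho x = 0) ->
     pevZ f b * rho b = 0) ->
  (forall n, p n \is monic) -> (forall n, size (p n) = n.+1) ->
  (forall n, 0 < h n) ->
  (forall m n, ipZ rho (pevZ (p m)) (pevZ (p n)) = h n * (n == m)%:R) ->
  exists c : nat -> R,
    (forall (n : nat) (x : int),
       Al f g (pevZ (p n)) x =
         - (c n / h n.+1) * pevZ (p n.+1) x
         + (if n is n'.+1 then c n' / h n' * pevZ (p n') x else 0)) /\
    (forall j k : nat,
       ipZ rho (pevZ (p j)) (Al f g (pevZ (p k))) =
         c j * (k == j.+1)%:R - c k * (j == k.+1)%:R).

Proof.
move=> _ Hmom Hf Hg Hpear _ _ Hmon Hsz Hh Horth.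
have Hort : forall m n : nat, J _ rho (p m * p n) = h n * (n == m)%:R.
  move=> m n; rewrite -Horth /J /ipZ; apply: (sumZ_ext _ _) => x; by rewrite pevZM.
exists (c _ rho f g p); split.
  by move=> n x; apply: (@pointwise _ _ Hmom f g Hpear Hf Hg p h Hmon Hsz Hh Hort).
move=> j k; rewrite -(@Jform _ _ Hmom f g Hpear Hf Hg p h Hmon Hsz Hort j k) /ipZ /J.
apply: (sumZ_ext _ _) => x; by rewrite pevZM AlE.
Qed.
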